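(* Let $b\ge 1$, and let $\boldsymbol{\Omega}\in\mathbb{R}^{b\times b}$ and $\widetilde{\mathbf r}\in\mathbb{R}^{b}$ be the matrix and vector defined in the context (arising from one inner loop of the GN-BP algorithm). Let $q_1,\dots,q_b\in\{0,1\}$ be a realization of independent $\mathrm{Ber}(p)$ random variables, and set $\mathbf Q=\mathrm{diag}(1-q_1,\dots,1-q_b)$, $\mathbf R=\mathrm{diag}(q_1,\dots,q_b)$. Let $0<\alpha_1<1$ and $\alpha_2=1-\alpha_1$. Define $$\bar{\mathbf r}=(\mathbf Q+\alpha_2\mathbf R)\,\widetilde{\mathbf r},\qquad \bar{\boldsymbol\Omega}=\mathbf Q\boldsymbol\Omega+\alpha_2\mathbf R\boldsymbol\Omega-\alpha_1\mathbf R,$$ and consider the damped mean-message iteration $\mathbf r_{\mathrm d}^{(\tau)}=\bar{\mathbf r}-\bar{\boldsymbol\Omega}\,\mathbf r_{\mathrm d}^{(\tau-1)}$, $\tau=1,2,\dots$. Then $\mathbf r_{\mathrm d}^{(\tau)}$ converges to a unique fixed point $\hat{\mathbf r}_{\mathrm d}=\lim_{\tau\to\infty}\mathbf r_{\mathrm d}^{(\tau)}$ for every initial point $\mathbf r_{\mathrm d}^{(0)}\in\mathbb{R}^b$ if and only if the spectral radius satisfies $\rho(\bar{\boldsymbol\Omega})<1$. Furthermore, in that case $\hat{\mathbf r}_{\mathrm d}=\hat{\mathbf r}_{\mathrm s}:=(\mathbf I+\boldsymbol\Omega)^{-1}\widetilde{\mathbf r}$, i.e., the fixed point coincides with the fixed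 point of the undamped synchronous iteration $\mathbf r_{\mathrm s}^{(\tau)}=\widetilde{\mathbf r}-\boldsymbol\Omega\,\mathbf r_{\mathrm s}^{(\tau-1)}$.
   Context: Setting (one inner loop of Gauss-Newton belief propagation for the linearized model $\mathbf r(\mathbf x^{(\nu)})=\mathbf J(\mathbf x^{(\nu)})\Delta\mathbf x+\mathbf u$): consider the bipartite subgraph of the factor graph consisting of variable nodes $\mathcal V$ (state increments $\Delta x_s$), indirect factor nodes $f_1,\dots,f_m$ (one per indirect measurement with residual $r_i$ and variance $v_i>0$), and the set $\mathcal B$ of edges between them, $b=|\mathcal B|$; $f_i$ has degree $d_i$, and edges are ordered grouped by factor node ($f_1$'s edges first, etc.). Vectors in $\mathbb R^b$ are indexed by edges. Definitions: $\mathbf C=\mathrm{diag}$ of the (nonzero) Jacobian coefficients $C_{\Delta x_p}=\partial h_i/\partial x_p$ on each edge $(f_i,\Delta x_p)$. $\boldsymbol\Pi=\mathrm{blockdiag}(\mathbf\Pi_1,\dots,\mathbf\Pi_m)$ with $\mathbf\Pi_i=\mathbf 1_{d_i\times d_i}-\mathbf I_{d_i}$. $\mathbf D=\mathbf C^{-1}\boldsymbol\Pi\mathbf C$. $\boldsymbol\Gamma\in\{0,1\}^{b\times b}$ has entry $1$ at (edge $(f_i,\Delta x_q)$, edge $(f_j,\Delta x_{q'})$) iff $i\ne j$ and $q=q'$ (both edges incident to the same variable node), and $0$ otherwise. $\mathbf L$ is diagonal with entry on edge $(f_i,\Delta x_q)$ equal to the inverse variance of the message from the singly-connected (direct/virtual/slack)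 factor node attached to $\Delta x_q$; $\mathbf r_{\mathrm b}$ is the vector with entry on edge $(f_i,\Delta x_q)$ equal to the mean of that singly-connected factor node's message to $\Delta x_q$. $\mathbf r_{\mathrm a}$ has entry $r_i$ on every edge of $f_i$. $\hat{\boldsymbol\Sigma}_{\mathrm s}=\mathrm{diag}(\hat{\mathbf v}_{\mathrm s})$, where $\hat{\mathbf v}_{\mathrm s}>0$ is the limit of the factor-to-variable message variances. $\hat{\mathbf A}=\boldsymbol\Gamma\hat{\boldsymbol\Sigma}_{\mathrm s}^{-1}\boldsymbol\Gamma^{\mathrm T}+\mathbf L$, and for a square matrix $\mathbf A$, $\mathfrak D(\mathbf A)=\mathrm{diag}(A_{11},\dots,A_{bb})$. Then $\boldsymbol\Omega=\mathbf D\,(\mathfrak D(\hat{\mathbf A}))^{-1}\boldsymbol\Gamma\hat{\boldsymbol\Sigma}_{\mathrm s}^{-1}$ and $\widetilde{\mathbf r}=\mathbf C^{-1}\mathbf r_{\mathrm a}-\mathbf D\,(\mathfrak D(\hat{\mathbf A}))^{-1}\mathbf L\,\mathbf r_{\mathrm b}$. *)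

(* Defs.v *)
From mathcomp Require Import all_boot all_order all_algebra.
From mathcomp Require Import all_classical all_reals all_analysis.
From mathcomp Require Import complex.
Import Order.TTheory GRing.Theory Num.Theory.
Import numFieldTopology.Exports numFieldNormedType.Exports.

Set Implicit Arguments.
Unset Strict Implicit.
Unset Printing Implicit Defensive.

Local Open Scope ring_scope.
Local Open Scope classical_set_scope.

(* Bipartite subgraph of the factor graph:
   - variable nodes 'I_n, indirect factor nodes 'I_m, edges 'I_b;
   - [fac e] is the factor node of edge e, [var e] its variable node. *)

Section GNBP.
Context {R : realType}.
Variables (n m b : nat).
Variables (fac : 'I_b -> 'I_m) (var : 'I_b -> 'I_n).

Definition edges_grouped := forall e e' : 'I_b, (e <= e')%N -> (fac e <= fac e')%N.
Definition edges_simple :=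
  forall e e' : 'I_b, fac e = fac e' -> var e = var e' -> e = e'.
Definition factors_nonisolated := forall i : 'I_m, exists e : 'I_b, fac e = i.

(* C = diag of Jacobian coefficients on each edge *)
Definition Cmx (c : 'I_b -> R) : 'M[R]_b := diag_mx (\row_e c e).

(* Pi = blockdiag(1_{d_i x d_i} - I_{d_i}) *)
Definition Pimx : 'M[R]_b :=
  \matrix_(e, e') ((fac e == fac e') && (e != e'))%:R.

Definition Dmx (c : 'I_b -> R) : 'M[R]_b := invmx (Cmx c) *m Pimx *m Cmx c.

Definition Gammamx : 'M[R]_b :=
  \matrix_(e, e') ((fac e != fac e') && (var e == var e'))%:R.

(* L: inverse variance of the singly-connected factor message at var e *)
Definition Lmx (lam : 'I_n -> R) : 'M[R]_b := diag_mx (\row_e lam (var e)).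

(* r_b: mean of the singly-connected factor message at var e *)
Definition rbvec (mu : 'I_n -> R) : 'cV[R]_b := \col_e mu (var e).

(* r_a: residual r_i on every edge of f_i *)
Definition ravec (res : 'I_m -> R) : 'cV[R]_b := \col_e res (fac e).

Definition Sigmx (vs : 'I_b -> R) : 'M[R]_b := diag_mx (\row_e vs e).

Definition Ahat (lam : 'I_n -> R) (vs : 'I_b -> R) : 'M[R]_b :=
  Gammamx *m invmx (Sigmx vs) *m Gammamx^T + Lmx lam.

End GNBP.

Definition diagpart (R : pzRingType) (k : nat) (A : 'M[R]_k) : 'M[R]_k :=
  diag_mx (\row_i A i i).

Section GNBP2.
Context {R : realType}.
Variables (n m b : nat).
Variables (fac : 'I_b -> 'I_m) (var : 'I_b -> 'I_n).

Definition Omegamx (c : 'I_b -> R) (lam : 'I_n -> R) (vs : 'I_b -> R) : 'M[R]_b :=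
  Dmx fac c *m invmx (diagpart (Ahat fac var lam vs)) *m Gammamx fac var
    *m invmx (Sigmx vs).

Definition rtilde (c : 'I_b -> R) (lam mu : 'I_n -> R) (vs : 'I_b -> R)
  (res : 'I_m -> R) : 'cV[R]_b :=
  invmx (Cmx c) *m ravec fac res
  - Dmx fac c *m invmx (diagpart (Ahat fac var lam vs)) *m Lmx var lam
      *m rbvec var mu.

End GNBP2.

Definition Qmx (R : realType) (b : nat) (q : 'I_b -> bool) : 'M[R]_b :=
  diag_mx (\row_e (1 - (q e)%:R)).
Definition Rmx (R : realType) (b : nat) (q : 'I_b -> bool) : 'M[R]_b :=
  diag_mx (\row_e (q e)%:R).

Definition lin_iter (R : realType) (b : nat) (r : 'cV[R]_b) (W : 'M[R]_b)
  (x0 : 'cV[R]_b) (t : nat) : 'cV[R]_b :=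
  iter t (fun x => r - W *m x) x0.

Local Open Scope complex_scope.
Definition spectral_radius (R : realType) (k : nat) (A : 'M[R]_k) : R :=
  sup [set r : R | exists l : R[i],
         eigenvalue (map_mx (fun x : R => x%:C) A) l /\ Normc.normc l = r].

(* Main.v *)
Require Import Defs.
From mathcomp Require Import all_boot all_order all_algebra.
From mathcomp Require Import all_classical all_reals all_analysis.
From mathcomp Require Import complex.
From mathcomp Require Import ring lra.
Import Order.TTheory GRing.Theory Num.Theory.
Import numFieldTopology.Exports numFieldNormedType.Exports.
Local Open Scope ring_scope.
Local Open Scope classical_set_scope.
Section S.
Variable R : realType.
Local Notation C := (complex R).
Local Notation normc := (@Normc.normc R).

Lemma normc_ge0 (x : C) : 0 <= normc x.
Proof. by case: x => a b; rewrite /Normc.normc sqrtr_ge0. Qed.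


Lemma squeeze0 (f g : nat -> R) : (forall t, 0 <= f t <= g t) -> g @ \oo --> 0 -> f @ \oo --> 0.
Proof.
move=> H Hg; apply: (@squeeze_cvgr _ _ _ _ (fun=> 0) g f).
  by near=> t; exact: H.
  exact: cvg_cst.
exact: Hg.
Unshelve. all: end_near. Qed.

Lemma rec_cvg0 (a e : nat -> R) (r : R) : 0 <= r < 1 -> (forall t, 0 <= a t) ->
  (forall t, a t.+1 <= r * a t + e t) -> e @ \oo --> 0 -> a @ \oo --> 0.
Proof.
move=> /andP[r0 r1] a0 Hrec He; apply/cvgrPdist_lt => eps eps0.
have d0 : 0 < eps * (1 - r) / 2 by rewrite !mulr_gt0 // ?subr_gt0 // invr_gt0.
have [T _ HT] := (cvgrPdist_lt _ _).1 He _ d0.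
have Hk : forall k, a (T + k)%N <= r ^+ k * a T + eps / 2.
  elim=> [|k IH]; first by rewrite addn0 expr0 mul1r lerDl divr_ge0 // ltW.
  rewrite addnS; apply: (le_trans (Hrec _)).
  have : `|0 - e (T + k)%N| < eps * (1 - r) / 2 by apply: HT => /=; rewrite leq_addr.
  rewrite sub0r normrN => /(le_lt_trans (ler_norm _)) => Hek.
  have := ler_wpM2l r0 IH => H1.
  apply: (le_trans (lerD H1 (ltW Hek))).
  rewrite exprS -mulrA; lra.
have Hg := @cvg_geometric _ (a T) r.
have : `|r| < 1 by rewrite ger0_norm.
move=> /Hg /cvgrPdist_lt /(_ (eps / 2)) [].
  by rewrite divr_gt0.
move=> K _ HK.
exists (T + K)%N => // t /= Ht.
have -> : t = (T + (t - T))%N by rewrite subnKC // (leq_trans (leq_addr _ _) Ht).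
rewrite sub0r normrN ger0_norm //.
apply: (le_lt_trans (Hk _)).
have : `|0 - geometric (a T) r (t - T)%N| < eps / 2.
  apply: HK => /=; rewrite leq_subRL ?(leq_trans (leq_addr _ _) Ht) //.
rewrite sub0r normrN /geometric /= => /(le_lt_trans (ler_norm _)).
rewrite mulrC; lra.
Qed.

Definition nc {k l} (M : 'M[C]_(k,l)) : R := \sum_i \sum_j normc (M i j).

Lemma nc_ge0 k l (M : 'M[C]_(k,l)) : 0 <= nc M.
Proof. by apply: sumr_ge0 => i _; apply: sumr_ge0 => j _; exact: normc_ge0. Qed.

Lemma ncD k l (M N : 'M[C]_(k,l)) : nc (M + N) <= nc M + nc N.
Proof.
rewrite /nc -big_split /=; apply: ler_sum => i _.
rewrite -big_split /=; apply: ler_sum => j _; rewrite mxE; exact: le_normcD.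
Qed.

Lemma ncZ k l (z : C) (M : 'M[C]_(k,l)) : nc (z *: M) = normc z * nc M.
Proof.
rewrite /nc mulr_sumr; apply: eq_bigr => i _; rewrite mulr_sumr.
by apply: eq_bigr => j _; rewrite mxE Normc.normcM.
Qed.

Lemma nc0 k l : nc (0 : 'M[C]_(k,l)) = 0.
Proof. by rewrite /nc big1 // => i _; rewrite big1 // => j _; rewrite mxE Normc.normc0. Qed.

Lemma nc_entry k l (M : 'M[C]_(k,l)) i j : normc (M i j) <= nc M.
Proof.
rewrite /nc (bigD1 i) //= (bigD1 j) //= -addrA lerDl addr_ge0 //.
  by apply: sumr_ge0 => ? _; exact: normc_ge0.
by apply: sumr_ge0 => ? _; apply: sumr_ge0 => ? _; exact: normc_ge0.
Qed.

Lemma core k (A : 'M[C]_k.+1) (s : seq C) : (forall z, z \in s -> normc z < 1) ->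
  forall v : 'cV[C]_k.+1, horner_mx A (\prod_(z <- s) ('X - z%:P)) *m v = 0 ->
  (fun t => nc (A ^+ t *m v)) @ \oo --> 0.
Proof.
elim: s => [|z s IH] Hs v.
  rewrite big_nil rmorph1 mul1mx => ->.
  under eq_fun do rewrite mulmx0 nc0; exact: cvg_cst.
rewrite big_cons => Hv.
have hX : horner_mx A ('X - z%:P) = A - z%:M by rewrite rmorphB /= horner_mx_X horner_mx_C.
set w := (A - z%:M) *m v.
have Hw : horner_mx A (\prod_(z <- s) ('X - z%:P)) *m w = 0.
  rewrite /w mulmxA -hX.
  have -> : horner_mx A (\prod_(z <- s) ('X - z%:P)) *m horner_mx A ('X - z%:P) = horner_mx A (('X - z%:P) * \prod_(z <- s) ('X - z%:P)).
    by rewrite mulrC rmorphM.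
  exact: Hv.
have IHw := IH (fun y ys => Hs y (mem_behead (s:=z :: s) ys)) w Hw.
have z1 := Hs z (mem_head _ _).
apply: (rec_cvg0 _ _ (normc z) _ _ _ IHw) => [|t|t]; first by rewrite normc_ge0 z1.
  exact: nc_ge0.
have -> : A ^+ t.+1 *m v = A ^+ t *m w + z *: (A ^+ t *m v).
  by rewrite /w exprSr -mulmxE -mulmxA mulmxBl mulmxBr mul_scalar_mx scalemxAr subrK.
by rewrite addrC; apply: (le_trans (ncD _ _ _ _)); rewrite ncZ.
Qed.

Lemma core2 k (A : 'M[C]_k.+1) : (forall l, eigenvalue A l -> normc l < 1) ->
  forall v : 'cV[C]_k.+1, (fun t => nc (A ^+ t *m v)) @ \oo --> 0.
Proof.
move=> Heig v; have [r Hr] := closed_field_poly_normal (char_poly A).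
move: Hr; rewrite (monicP (char_poly_monic A)) scale1r => Hr.
apply: (core _ _ r).
  by move=> z zr; apply: Heig; rewrite eigenvalue_root_char Hr root_prod_XsubC.
by rewrite -Hr Cayley_Hamilton mul0mx.
Qed.

Local Notation cm := (map_mx (real_complex R)).

Lemma normc_real (x : R) : normc (real_complex R x) = `|x|.
Proof. by rewrite /Normc.normc /= expr0n /= addr0 sqrtr_sqr. Qed.

Lemma mxnorm_nc k l (M : 'M[R]_(k,l)) : `|M| <= nc (cm M).
Proof.
rewrite /Num.norm /= mx_normrE; apply: bigmax_le; first exact: nc_ge0.
by move=> [i j] _; have := nc_entry _ _ (cm M) i j; rewrite mxE normc_real.
Qed.

Definition EigLt {k} (W : 'M[R]_k) := forall l, eigenvalue (cm W) l -> normc l < 1.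

Lemma eig_conv k (W : 'M[R]_k.+1) : EigLt W ->
  forall v : 'cV[R]_k.+1, (fun t => (- W) ^+ t *m v) @ \oo --> (0 : 'cV[R]_k.+1).
Proof.
move=> HW v.
have HA : forall l, eigenvalue (cm (- W)) l -> normc l < 1.
  move=> l /eigenvalueP [u Hu u0]; rewrite -normcN; apply: HW.
  apply/eigenvalueP; exists u => //.
  by move: Hu; rewrite map_mxN mulmxN scaleNr => <-; rewrite opprK.
have := core2 _ _ HA (cm v).
move=> Hc; apply/norm_cvg0P.
apply: (squeeze0 _ _ _ Hc) => t; rewrite normr_ge0 /=.
by rewrite -rmorphXn -map_mxM; exact: mxnorm_nc.
Qed.

Lemma eig_in_roots k (W : 'M[R]_k) :
  {rs : seq C | forall l, eigenvalue (cm W) l <-> l \in rs}.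
Proof.
have [rs Hrs] := closed_field_poly_normal (char_poly (cm W)).
move: Hrs; rewrite (monicP (char_poly_monic _)) scale1r => Hrs.
by exists rs => l; rewrite eigenvalue_root_char Hrs root_prod_XsubC.
Qed.

Lemma rho_eig k (W : 'M[R]_k) : spectral_radius W < 1 -> EigLt W.
Proof.
rewrite /spectral_radius; set S := [set _ | _] => Hr l Hl.
have [rs Hrs] := eig_in_roots _ W.
have ub : has_ubound S.
  exists (\sum_(z <- rs) normc z) => x [l' [Hl' <-]].
  have := (Hrs l').1 Hl' => Hin.
  rewrite (big_rem _ Hin) /= lerDl.
  by apply: sumr_ge0 => ? _; exact: normc_ge0.
apply: le_lt_trans Hr; apply: (ub_le_sup ub); exists l; split => //.
Qed.

Lemma eig_rho k (W : 'M[R]_k) : EigLt W -> spectral_radius W < 1.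
Proof.
rewrite /spectral_radius; set S := [set _ | _] => HW.
have [->|/set0P ne] := eqVneq S set0; first by rewrite sup0 ltr01.
have [rs Hrs] := eig_in_roots _ W.
apply: (le_lt_trans (ge_sup ne (x := \big[Order.max/0]_(z <- rs) normc z) _)).
  move=> x [l [Hl <-]]; apply: le_bigmax_seq => //; exact/(Hrs l).1.
rewrite big_seq; apply: bigmax_lt => // z /(Hrs z).2; exact: HW.
Qed.

Lemma eig_unit k (W : 'M[R]_k) : EigLt W -> (1%:M + W) \in unitmx.
Proof.
move=> HW; rewrite unitmxE unitfE; apply/negP => /eqP H0.
have : \det (cm (1%:M + W)) == 0 by rewrite det_map_mx H0 rmorph0.
move/det0P => [z z0 Hz].
have : eigenvalue (cm W) (-1).
  apply/eigenvalueP; exists z => //.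
  move: Hz; rewrite map_mxD map_mx1 mulmxDr mulmx1 => /eqP.
  by rewrite addrC addr_eq0 scaleN1r => /eqP.
by move/HW; rewrite normcN Normc.normc1 ltxx.
Qed.

Lemma normcX (x : C) t : normc (x ^+ t) = normc x ^+ t.
Proof. by elim: t => [|t IH]; rewrite ?expr0 ?Normc.normc1 // !exprS Normc.normcM IH. Qed.

Lemma entry_le_norm k l (M : 'M[R]_(k,l)) i j : `|M i j| <= `|M|.
Proof.
rewrite [X in _ <= X]/Num.norm /= mx_normrE.
exact: (le_bigmax 0 (fun ij : 'I_k * 'I_l => `|M ij.1 ij.2|) (i, j)).
Qed.

Lemma conv_eig k (W : 'M[R]_k.+1) :
  (forall v : 'cV[R]_k.+1, (fun t => (- W) ^+ t *m v) @ \oo --> (0 : 'cV[R]_k.+1)) ->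
  EigLt W.
Proof.
move=> Hc l /eigenvalueP [z Hz z0]; rewrite ltNge; apply/negP => Hl1.
have : ~~ [forall j, z 0 j == 0].
  apply: contra z0 => /forallP H; apply/eqP/rowP => j; rewrite mxE; exact/eqP/H.
rewrite negb_forall => /existsP [j zj].
set A := cm (- W).
have HzA : z *m A = (- l) *: z by rewrite /A map_mxN mulmxN Hz scaleNr.
have HzAt : forall t, z *m A ^+ t = (- l) ^+ t *: z.
  elim=> [|t IH]; first by rewrite expr0 scale1r mulmx1.
  by rewrite exprSr -mulmxE mulmxA IH -scalemxAl HzA scalerA -exprSr.
set c := normc (z 0 j).
have c0 : 0 < c.
  rewrite lt_def normc_ge0 andbT; apply: contra zj => /eqP /Normc.eq0_normc ->.
  by [].
set K := \sum_i normc (z 0 i).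
have K0 : 0 <= K by apply: sumr_ge0 => ? _; exact: normc_ge0.
pose g t := `|(- W) ^+ t *m delta_mx j (0 : 'I_1)|.
have Hle : forall t, c <= K * g t.
  move=> t.
  have : normc ((z *m A ^+ t) 0 j) = normc (- l) ^+ t * c.
    by rewrite HzAt mxE Normc.normcM normcX.
  move=> Heq.
  have H1 : c <= normc ((z *m A ^+ t) 0 j).
    rewrite Heq ler_peMl ?normc_ge0 //; apply: exprn_ege1; by rewrite normcN.
  apply: (le_trans H1); rewrite mxE mulr_suml.
  have H2 : forall (s : seq 'I_k.+1) (F : 'I_k.+1 -> C),
      normc (\sum_(i <- s) F i) <= \sum_(i <- s) normc (F i).
    move=> s F; elim: s => [|x s IH]; first by rewrite !big_nil Normc.normc0.
    rewrite !big_cons; apply: (le_trans (le_normcD _ _)); exact: lerD.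
  apply: (le_trans (H2 _ _)); apply: ler_sum => i _.
  rewrite Normc.normcM; apply: ler_pM; rewrite ?normc_ge0 //.
  rewrite /A -rmorphXn mxE normc_real /g.
  have -> : ((- W) ^+ t) i j = (((- W) ^+ t) *m delta_mx j (0 : 'I_1)) i 0.
    by rewrite -colE mxE.
  exact: entry_le_norm.
have Hpos : 0 < c / (K + 1) by rewrite divr_gt0 // ltr_wpDl.
have [T _ HT] := (cvgrPdist_lt _ _).1 (Hc (delta_mx j 0)) _ Hpos.
have := HT T (leqnn T); rewrite /= sub0r normrN -/(g T) => HgT.
have g0 : 0 <= g T by exact: normr_ge0.
have := Hle T; move: HgT; rewrite ltr_pdivlMr ?ltr_wpDl //.
move=> H3 H4; have : K * g T <= g T * (K + 1) by rewrite mulrDr mulr1 mulrC lerDl.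
lra.
Qed.

Lemma iter_eq k (r : 'cV[R]_k.+1) (O : 'M[R]_k.+1) (rhat : 'cV[R]_k.+1) :
  rhat = r - O *m rhat -> forall r0 t,
  lin_iter r O r0 t = rhat + (- O) ^+ t *m (r0 - rhat).
Proof.
move=> Hfix r0; have Hr : r = rhat + O *m rhat by rewrite {1}Hfix subrK.
elim=> [|t IH]; first by rewrite /lin_iter /= expr0 mul1mx addrC subrK.
rewrite /lin_iter iterS -/(lin_iter r O r0 t) IH Hr mulmxDr exprS -mulmxE -mulmxA mulNmx.
by rewrite opprD addrA addrK.
Qed.

Lemma fix_iff k (r : 'cV[R]_k.+1) (O : 'M[R]_k.+1) : (1%:M + O) \in unitmx ->
  forall y, y = r - O *m y <-> y = invmx (1%:M + O) *m r.
Proof.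
move=> U y; split => H.
  have : (1%:M + O) *m y = r by rewrite mulmxDl mul1mx {1}H subrK.
  by move=> <-; rewrite mulKmx.
have : (1%:M + O) *m y = r by rewrite H mulKVmx.
by rewrite mulmxDl mul1mx => <-; rewrite addrK.
Qed.

Lemma main_conv k (r : 'cV[R]_k.+1) (O : 'M[R]_k.+1) : spectral_radius O < 1 ->
  (1%:M + O) \in unitmx /\
  (forall y, y = r - O *m y <-> y = invmx (1%:M + O) *m r) /\
  forall r0, lin_iter r O r0 @ \oo --> invmx (1%:M + O) *m r.
Proof.
move=> /rho_eig HE; have U := eig_unit _ _ HE.
have Hf := fix_iff _ r _ U; split => //; split => // r0.
have Hfix := (Hf (invmx (1%:M + O) *m r)).2 erefl.
have E := iter_eq _ _ _ _ Hfix r0.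
rewrite (_ : lin_iter r O r0 = fun t => invmx (1%:M + O) *m r + (- O) ^+ t *m (r0 - invmx (1%:M + O) *m r)); last first.
  by apply: funext => t; rewrite E.
rewrite -[X in _ --> X]addr0; apply: cvgD; first exact: cvg_cst.
exact: eig_conv.
Qed.

Lemma conv_rho k (r : 'cV[R]_k.+1) (O : 'M[R]_k.+1) (rhat : 'cV[R]_k.+1) :
  rhat = r - O *m rhat -> (forall r0, lin_iter r O r0 @ \oo --> rhat) ->
  spectral_radius O < 1.
Proof.
move=> Hfix Hc; apply: eig_rho; apply: conv_eig => v.
have H := Hc (rhat + v).
rewrite (_ : lin_iter r O (rhat + v) = fun t => rhat + (- O) ^+ t *m v) in H; last first.
  by apply: funext => t; rewrite (iter_eq _ _ _ _ Hfix) [rhat + v]addrC addrK.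
rewrite (_ : (fun t => (- O) ^+ t *m v) = fun t => rhat + (- O) ^+ t *m v - rhat).
  by rewrite -(subrr rhat); apply: cvgB => //; exact: cvg_cst.
by apply: funext => t; rewrite addrC addKr.
Qed.
End S.
Arguments main_conv {R k}.
Arguments conv_rho {R k r O rhat}.

Theorem theorem3 (R : realType) (n m b : nat)
  (fac : 'I_b -> 'I_m) (var : 'I_b -> 'I_n)
  (c : 'I_b -> R) (lam mu : 'I_n -> R) (vs : 'I_b -> R) (res : 'I_m -> R)
  (q : 'I_b -> bool) (a1 : R) :
  (0 < b)%N ->
  edges_grouped fac -> edges_simple fac var -> factors_nonisolated fac ->
  (forall e, c e != 0) -> (forall j, 0 < lam j) -> (forall e, 0 < vs e) ->
  0 < a1 < 1 ->
  let a2 := 1 - a1 in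
  let Om := Omegamx fac var c lam vs in
  let rt := rtilde fac var c lam mu vs res in
  let rbar := (Qmx R q + a2 *: Rmx R q) *m rt in
  let Ombar := Qmx R q *m Om + a2 *: (Rmx R q *m Om) - a1 *: Rmx R q in
  ((exists rhat : 'cV[R]_b,
      (forall y : 'cV[R]_b, y = rbar - Ombar *m y <-> y = rhat) /\
      (forall r0 : 'cV[R]_b, lin_iter rbar Ombar r0 @ \oo --> rhat))
   <-> spectral_radius Ombar < 1)
  /\
  (spectral_radius Ombar < 1 ->
     (1%:M + Om) \in unitmx /\
     forall r0 : 'cV[R]_b,
       lin_iter rbar Ombar r0 @ \oo --> invmx (1%:M + Om) *m rt).
Proof.
move: fac var c vs q; case: b => [//|k] fac var c vs q _ _ _ _ _ _ _ Ha a2 Om rt rbar Ombar.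
set Dm := Qmx R q + a2 *: Rmx R q.
have HQR : Qmx R q + Rmx R q = 1%:M.
  apply/matrixP => i j; rewrite !mxE; case: eqP => _.
    by rewrite !mulr1n subrK.
  by rewrite !mulr0n addr0.
have Hid : 1%:M + Ombar = Dm *m (1%:M + Om).
  rewrite /Ombar /Dm mulmxDr mulmx1 mulmxDl -scalemxAl -HQR.
  move: (Qmx R q *m Om) (Rmx R q *m Om) (Qmx R q) (Rmx R q) => U V X Y.
  by apply/matrixP => i j; rewrite !mxE /a2; ring.
split.
  split.
    move=> [rhat [Hf Hc]]; apply: (conv_rho (rhat := rhat)) => //.
    exact/(Hf rhat).2.
  move=> Hs; have [U [Hf Hc]] := main_conv rbar _ Hs.
  by exists (invmx (1%:M + Ombar) *m rbar); split.
move=> Hs; have [U [Hf Hc]] := main_conv rbar _ Hs.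
move: (U); rewrite Hid unitmx_mul => /andP [UD UO]; split => // r0.
have -> : invmx (1%:M + Om) *m rt = invmx (1%:M + Ombar) *m rbar.
  have E1 : (1%:M + Ombar) *m (invmx (1%:M + Om) *m rt) = rbar by rewrite Hid -mulmxA mulKVmx.
  by rewrite -E1 mulKmx.
exact: Hc.
Qed.
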